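(* Fix $\nu>0$ and $\mu_k\in\mathbb{R}$, and consider the sub-problem of minimizing $\mathcal L_{\nu,\mu_k}(x)=f(x)+\mu_kh(x)+\frac{1}{2\nu}h(x)^2$ over $x\in\mathbb{R}^n$. Let $\bar x$ be a stationary point of $\mathcal L_{\nu,\mu_k}$, and set $\bar\tau=h(\bar x)/\nu$, $\bar\sigma_f=\nabla V_f(\Lambda_f(\bar x))$, $\bar\sigma_h=\nabla V_h(\Lambda_h(\bar x))$. If $G(\bar\tau,\bar\sigma_f,\bar\sigma_h)$ is nonsingular, then $(\bar\tau,\bar\sigma_f,\bar\sigma_h)$ is a stationary point of $P^d_{\nu,\mu_k}$ and $$\mathcal L_{\nu,\mu_k}(\bar x)=P^d_{\nu,\mu_k}(\bar\tau,\bar\sigma_f,\bar\sigma_h).$$ Furthermore, if $V_f$ and $V_h$ are convex, $\mu_k+\bar\tau>0$ and $G(\bar\tau,\bar\sigma_f,\bar\sigma_h)\succ0$, then $\bar x$ is a global minimizer of $\mathcal L_{\nu,\mu_k}$ on $\mathbb{R}^n$.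
   Context: Setting: $f(x)=V_f(\Lambda_f(x))+\tfrac12x^TAx-c^Tx$ ($A$ symmetric, $c\in\mathbb{R}^n$) and a single constraint function $h(x)=V_h(\Lambda_h(x))\in\mathbb{R}$, where $\Lambda_f:\mathbb{R}^n\to\mathbb{R}^{k_f}$, $\Lambda_h:\mathbb{R}^n\to\mathbb{R}^{l}$ are quadratic maps (components polynomials of degree at most 2), and $V_f,V_h$ are ''canonical functions'': each $V$ is differentiable on an open set $E$ containing the image of its $\Lambda$, $\nabla V:E\to E^*$ is a bijection onto an open set $E^*$, and the Legendre conjugate $V^*(\sigma)=\sigma^T\xi-V(\xi)$, $\xi=(\nabla V)^{-1}(\sigma)$, is differentiable on $E^*$ with $\nabla V^*=(\nabla V)^{-1}$. For fixed $\nu>0,\mu_k$, define for $\tau\in\mathbb{R}$, $\sigma_f\in E_f^*$, $\sigma_h\in E_h^*$: $$\Xi_1^{\nu,\mu_k}(x,\tau,\sigma_f,\sigma_h)=\Lambda_f(x)^T\sigma_f-V_f^*(\sigma_f)+(\mu_k+\tau)\big[\Lambda_h(x)^T\sigma_h-V_h^*(\sigma_h)\big]-\tfrac{\nu}{2}\tau^2+\tfrac12x^TAx-c^Tx,$$ which is quadratic in $x$ with $x$-independent Hessian $G(\tau,\sigma_f,\sigma_h)=\nabla_x^2\Xi_1^{\nu,\mu_k}$. The dual function $P^d_{\nu,\mu_k}(\tau,\sigma_f,\sigma_h)$ is defined, on the open set where $G(\tau,\sigma_f,\sigma_h)$ is nonsingular, as the value of $\Xi_1^{\nu,\mu_k}(\cdot,\tau,\sigma_f,\sigma_h)$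 at its unique stationary point in $x$; equivalently $P^d_{\nu,\mu_k}=U^\Lambda(\mu_k+\tau,\sigma_f,\sigma_h)-V_f^*(\sigma_f)-(\mu_k+\tau)V_h^*(\sigma_h)-\frac{\nu}{2}\tau^2$, where $U^\Lambda(\mu,\sigma_f,\sigma_h)$ is the stationary value in $x$ of $\Lambda_f(x)^T\sigma_f+\mu\Lambda_h(x)^T\sigma_h+\tfrac12x^TAx-c^Tx$. *)

(* Defs.v *)
From Stdlib Require Import Reals ClassicalEpsilon.
From mathcomp Require Import all_boot.
Set Implicit Arguments. Unset Strict Implicit.
Open Scope R_scope.

Definition vec (n : nat) := 'I_n -> R.
Definition mat (n : nat) := 'I_n -> 'I_n -> R.

Definition sumR (n : nat) (F : 'I_n -> R) : R := \big[Rplus/0]_(i < n) F i.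
Definition dot (n : nat) (u v : vec n) : R := sumR (fun i => u i * v i).
Definition vsub (n : nat) (u v : vec n) : vec n := fun i => u i - v i.
Definition vnorm (n : nat) (u : vec n) : R := sqrt (dot u u).
Definition bilin (n : nat) (M : mat n) (x y : vec n) : R :=
  sumR (fun i => sumR (fun j => x i * M i j * y j)).
Definition matvec (n : nat) (M : mat n) (x : vec n) : vec n :=
  fun i => sumR (fun j => M i j * x j).

Definition has_grad (k : nat) (F : vec k -> R) (x g : vec k) : Prop :=
  forall eps, 0 < eps -> exists delta, 0 < delta /\
    forall y, vnorm (vsub y x) < delta ->
      Rabs (F y - F x - dot g (vsub y x)) <= eps * vnorm (vsub y x).

Definition is_open (k : nat) (E : vec k -> Prop) : Prop :=
  forall x, E x -> exists r, 0 < r /\ forall y, vnorm (vsub y x) < r -> E y.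

(* A "canonical function" V on E with gradient map gV : E -> Estar a bijection
   whose inverse is gVinv; its Legendre conjugate (see Vstar below) is
   differentiable on Estar with gradient gVinv. *)
Definition Vstar (k : nat) (V : vec k -> R) (gVinv : vec k -> vec k)
  (s : vec k) : R := dot s (gVinv s) - V (gVinv s).

Record canonical_fun (k : nat) (V : vec k -> R) (E Estar : vec k -> Prop)
    (gV gVinv : vec k -> vec k) : Prop := {
  cf_E_open : is_open E;
  cf_Estar_open : is_open Estar;
  cf_diff : forall xi, E xi -> has_grad V xi (gV xi);
  cf_maps : forall xi, E xi -> Estar (gV xi);
  cf_inv_l : forall xi, E xi -> gVinv (gV xi) = xi;
  cf_inv_mem : forall s, Estar s -> E (gVinv s);
  cf_inv_r : forall s, Estar s -> gV (gVinv s) = s;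
  cf_conj_diff : forall s, Estar s -> has_grad (Vstar V gVinv) s (gVinv s)
}.

Definition vcomb (k : nat) (t : R) (x y : vec k) : vec k :=
  fun i => t * x i + (1 - t) * y i.
Definition convex_on (k : nat) (E : vec k -> Prop) (V : vec k -> R) : Prop :=
  (forall x y t, E x -> E y -> 0 <= t <= 1 -> E (vcomb t x y)) /\
  (forall x y t, E x -> E y -> 0 <= t <= 1 ->
     V (vcomb t x y) <= t * V x + (1 - t) * V y).

Record qmap (n k : nat) := QMap {
  qQ : 'I_k -> mat n;
  qb : 'I_k -> vec n;
  qc : 'I_k -> R
}.
Definition qeval (n k : nat) (L : qmap n k) (x : vec n) : vec k :=
  fun j => bilin (qQ L j) x x + dot (qb L j) x + qc L j.
(* Hessian of the scalar map x |-> Lambda(x)^T sigma : sum_j sigma_j (Q_j + Q_j^T) *)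
Definition qhess (n k : nat) (L : qmap n k) (s : vec k) : mat n :=
  fun i i' => sumR (fun j => s j * (qQ L j i i' + qQ L j i' i)).

Definition msymmetric (n : nat) (M : mat n) : Prop := forall i j, M i j = M j i.
Definition nonsingular (n : nat) (M : mat n) : Prop :=
  forall d : vec n, (forall i, matvec M d i = 0) -> forall i, d i = 0.
Definition posdef (n : nat) (M : mat n) : Prop :=
  forall d : vec n, (exists i, d i <> 0) -> 0 < bilin M d d.

Section Problem.
Variables (n kf l : nat) (A : mat n) (c : vec n)
  (Lf : qmap n kf) (Vf : vec kf -> R) (gVfinv : vec kf -> vec kf)
  (Lh : qmap n l) (Vh : vec l -> R) (gVhinv : vec l -> vec l)
  (nu mu : R).

Definition fobj (x : vec n) : R :=
  Vf (qeval Lf x) + / 2 * bilin A x x - dot c x.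
Definition hcon (x : vec n) : R := Vh (qeval Lh x).

Definition Laug (x : vec n) : R :=
  fobj x + mu * hcon x + / (2 * nu) * (hcon x) ^ 2.

Definition Xi1 (x : vec n) (t : R) (sf : vec kf) (sh : vec l) : R :=
  dot (qeval Lf x) sf - Vstar Vf gVfinv sf
  + (mu + t) * (dot (qeval Lh x) sh - Vstar Vh gVhinv sh)
  - nu / 2 * t ^ 2 + / 2 * bilin A x x - dot c x.

(* G(tau, sigma_f, sigma_h) = Hessian in x of Xi1 (x-independent) *)
Definition Gmat (t : R) (sf : vec kf) (sh : vec l) : mat n :=
  fun i i' => A i i' + qhess Lf sf i i' + (mu + t) * qhess Lh sh i i'.

Definition x_stationary (F : vec n -> R) (x : vec n) : Prop :=
  has_grad F x (fun _ => 0).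

(* dual function: value of Xi1 at its (unique, when G is nonsingular)
   stationary point in x *)
Definition Pd (t : R) (sf : vec kf) (sh : vec l) : R :=
  Xi1 (epsilon (inhabits (fun _ : 'I_n => 0))
         (fun x => x_stationary (fun y => Xi1 y t sf sh) x)) t sf sh.
End Problem.

Definition dist3 (kf l : nat) (t t' : R) (sf sf' : vec kf) (sh sh' : vec l) : R :=
  sqrt ((t' - t) ^ 2 + dot (vsub sf' sf) (vsub sf' sf) + dot (vsub sh' sh) (vsub sh' sh)).
Definition stationary3 (kf l : nat) (P : R -> vec kf -> vec l -> R)
  (t : R) (sf : vec kf) (sh : vec l) : Prop :=
  forall eps, 0 < eps -> exists delta, 0 < delta /\
    forall t' sf' sh', dist3 t t' sf sf' sh sh' < delta ->
      Rabs (P t' sf' sh' - P t sf sh) <= eps * dist3 t t' sf sf' sh sh'.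

(* Main.v *)
Require Import Defs.
From Stdlib Require Import Reals ClassicalEpsilon Classical FunctionalExtensionality Lra.
From HB Require Import structures.
From mathcomp Require Import all_boot all_algebra.
From mathcomp Require Import Rstruct.
Set Implicit Arguments. Unset Strict Implicit.
Open Scope R_scope.

Lemma Rplus_assoc' : associative Rplus. Proof. intros a b c; symmetry; apply Rplus_assoc. Qed.
Lemma Rplus_comm' : commutative Rplus. Proof. intros a b; apply Rplus_comm. Qed.
Lemma Rplus_0_l' : left_id 0 Rplus. Proof. intros a; apply Rplus_0_l. Qed.
HB.instance Definition _ := Monoid.isComLaw.Build R 0 Rplus Rplus_assoc' Rplus_comm' Rplus_0_l'.

Section Sums.
Variable n : nat.
Implicit Types F G : 'I_n -> R.

Lemma sumR_ext F G : (forall i, F i = G i) -> sumR F = sumR G.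
Proof. intros H; unfold sumR; apply eq_bigr; intros i _; apply H. Qed.

Lemma sumR_add F G : sumR (fun i => F i + G i) = sumR F + sumR G.
Proof. unfold sumR; rewrite big_split; reflexivity. Qed.

Lemma sumR_scal c F : sumR (fun i => c * F i) = c * sumR F.
Proof.
  unfold sumR; apply: (big_rec2 (fun x y => y = c * x)); first by ring.
  intros i x y _ ->; ring.
Qed.

Lemma sumR_scalr c F : sumR (fun i => F i * c) = sumR F * c.
Proof. rewrite Rmult_comm -sumR_scal; apply sumR_ext; intros; ring. Qed.

Lemma sumR_opp F : sumR (fun i => - F i) = - sumR F.
Proof. replace (- sumR F) with ((-1) * sumR F) by ring. rewrite -sumR_scal; apply sumR_ext; intros; ring. Qed.

Lemma sumR_sub F G : sumR (fun i => F i - G i) = sumR F - sumR G.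
Proof. unfold Rminus; rewrite -sumR_opp -sumR_add; reflexivity. Qed.

Lemma sumR_0 : sumR (fun _ : 'I_n => 0) = 0.
Proof. unfold sumR; apply big1; auto. Qed.

Lemma sumR_le F G : (forall i, F i <= G i) -> sumR F <= sumR G.
Proof.
  intros H; unfold sumR; apply: (big_rec2 (fun x y => x <= y)); first lra.
  intros i x y _ Hxy; specialize (H i); lra.
Qed.

Lemma sumR_ge0 F : (forall i, 0 <= F i) -> 0 <= sumR F.
Proof. intros H; rewrite -sumR_0; apply sumR_le; auto. Qed.

Lemma sumR_abs F : Rabs (sumR F) <= sumR (fun i => Rabs (F i)).
Proof.
  unfold sumR; apply: (big_rec2 (fun x y => Rabs x <= y)).
  - rewrite Rabs_R0; lra.
  - intros i x y _ Hxy. eapply Rle_trans; [apply Rabs_triang|]; lra.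
Qed.

Lemma sumR_term F (i : 'I_n) : (forall j, 0 <= F j) -> F i <= sumR F.
Proof.
  intros H; unfold sumR; rewrite (bigD1 i) //=.
  assert (0 <= \big[Rplus/0]_(j < n | j != i) F j).
  { apply: (big_rec (fun x => 0 <= x)); first lra. intros j x _ Hx; specialize (H j); lra. }
  pose proof (Rplus_le_compat_l (F i) _ _ H0) as H1. rewrite Rplus_0_r in H1. exact H1.
Qed.

Lemma sumR_delta (i : 'I_n) (a : R) : sumR (fun j => if j == i then a else 0) = a.
Proof.
  unfold sumR; rewrite (bigD1 i) //= eqxx big1; first lra.
  intros j Hj; rewrite (negbTE Hj); reflexivity.
Qed.

End Sums.

Lemma sumR_swap n m (F : 'I_n -> 'I_m -> R) :
  sumR (fun i => sumR (fun j => F i j)) = sumR (fun j => sumR (fun i => F i j)).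
Proof. unfold sumR; apply exchange_big. Qed.

Lemma fin_bound (T : finType) (f : T -> R) : exists b, 0 <= b /\ forall x, Rabs (f x) <= b.
Proof.
  exists (\big[Rplus/0]_(x : T) Rabs (f x)); split.
  - apply: (big_rec (fun x => 0 <= x)); first lra. intros j x _ Hx; pose proof (Rabs_pos (f j)); lra.
  - intros x; rewrite (bigD1 x) //=.
    assert (0 <= \big[Rplus/0]_(j | j != x) Rabs (f j)).
    { apply: (big_rec (fun x => 0 <= x)); first lra. intros j y _ Hy; pose proof (Rabs_pos (f j)); lra. }
    pose proof (Rplus_le_compat_l (Rabs (f x)) _ _ H) as H1. rewrite Rplus_0_r in H1. exact H1.
Qed.

Definition N1 n (u : vec n) := sumR (fun i => Rabs (u i)).
Definition nR n := sumR (fun _ : 'I_n => 1).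

Lemma N1_ge0 n (u : vec n) : 0 <= N1 u.
Proof. apply sumR_ge0; intros; apply Rabs_pos. Qed.
Lemma nR_ge0 n : 0 <= nR n.
Proof. apply sumR_ge0; intros; lra. Qed.

Lemma dot_ge0 n (u : vec n) : 0 <= dot u u.
Proof. apply sumR_ge0; intros; nra. Qed.

Lemma vnorm_ge0 n (u : vec n) : 0 <= vnorm u.
Proof. apply sqrt_pos. Qed.

Lemma comp_le_vnorm n (u : vec n) i : Rabs (u i) <= vnorm u.
Proof.
  unfold vnorm. rewrite <- sqrt_Rsqr_abs. apply sqrt_le_1_alt.
  unfold Rsqr. apply (sumR_term (F := fun i => u i * u i)). intros; nra.
Qed.

Lemma vnorm_le_N1 n (u : vec n) : vnorm u <= N1 u.
Proof.
  unfold vnorm. rewrite <- (sqrt_Rsqr (N1 u)) by apply N1_ge0.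
  apply sqrt_le_1_alt. unfold Rsqr.
  suff HH : (dot u u <= N1 u * N1 u /\ 0 <= N1 u) by tauto.
  unfold dot, N1, sumR.
  apply: (big_rec2 (fun x y => x <= y * y /\ 0 <= y)).
  - lra.
  - intros i x y _ [H1 H2]. split.
    + pose proof (Rabs_pos (u i)). assert (u i * u i = Rabs (u i) * Rabs (u i)).
      { rewrite -Rabs_mult. symmetry; apply Rabs_pos_eq; nra. }
      nra.
    + pose proof (Rabs_pos (u i)); lra.
Qed.

Lemma N1_le_vnorm n (u : vec n) : N1 u <= nR n * vnorm u.
Proof.
  unfold nR. rewrite -sumR_scalr. apply sumR_le; intros i. rewrite Rmult_1_l. apply comp_le_vnorm.
Qed.

Lemma comp_le_N1 n (u : vec n) i : Rabs (u i) <= N1 u.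
Proof. apply (sumR_term (F := fun i => Rabs (u i))); intros; apply Rabs_pos. Qed.

Lemma dot_bound n (u v : vec n) : Rabs (dot u v) <= N1 u * N1 v.
Proof.
  eapply Rle_trans; [apply sumR_abs|]. unfold N1. rewrite -sumR_scalr.
  apply sumR_le; intros i. rewrite Rabs_mult. apply Rmult_le_compat_l; [apply Rabs_pos|apply comp_le_N1].
Qed.

Lemma vnorm_pos n (u : vec n) i : u i <> 0 -> 0 < vnorm u.
Proof. intros H. pose proof (comp_le_vnorm u i). pose proof (Rabs_pos_lt _ H). lra. Qed.

Lemma vnorm_zero n (x : vec n) : vnorm (vsub x x) = 0.
Proof.
  unfold vnorm, dot, vsub. rewrite (sumR_ext (G := fun _ => 0)); [|intros; ring]. rewrite sumR_0; apply sqrt_0.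
Qed.

Lemma vnorm_scal n (t : R) (u : vec n) : vnorm (fun i => t * u i) = Rabs t * vnorm u.
Proof.
  unfold vnorm, dot. rewrite (sumR_ext (G := fun i => (t * t) * (u i * u i))); [|intros; ring].
  rewrite sumR_scal sqrt_mult; [| nra | apply dot_ge0]. rewrite -(sqrt_Rsqr_abs t); reflexivity.
Qed.

Lemma matvec_bound n (M : mat n) b (v : vec n) : (forall i j, Rabs (M i j) <= b) ->
  forall i, Rabs (matvec M v i) <= b * N1 v.
Proof.
  intros H i. eapply Rle_trans; [apply sumR_abs|]. unfold N1; rewrite -sumR_scal.
  apply sumR_le; intros j. rewrite Rabs_mult. apply Rmult_le_compat_r; [apply Rabs_pos|apply H].
Qed.

Lemma matvec_N1 n (M : mat n) b (v : vec n) : (forall i j, Rabs (M i j) <= b) ->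
  N1 (matvec M v) <= nR n * (b * N1 v).
Proof.
  intros H. unfold nR at 1. rewrite -sumR_scalr. apply sumR_le; intros i. rewrite Rmult_1_l. apply matvec_bound; auto.
Qed.

Lemma bilin_bound n (M : mat n) b (x y : vec n) : (forall i j, Rabs (M i j) <= b) ->
  Rabs (bilin M x y) <= b * N1 x * N1 y.
Proof.
  intros H. eapply Rle_trans; [apply sumR_abs|].
  replace (b * N1 x * N1 y) with (N1 x * (b * N1 y)) by ring. unfold N1 at 1. rewrite -sumR_scalr.
  apply sumR_le; intros i. eapply Rle_trans; [apply sumR_abs|].
  rewrite (sumR_ext (G := fun j => Rabs (x i) * (Rabs (M i j) * Rabs (y j)))); last first.
  { intros j; rewrite !Rabs_mult; ring. }
  rewrite sumR_scal.
  apply Rmult_le_compat_l; [apply Rabs_pos|]. unfold N1; rewrite -sumR_scal.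
  apply sumR_le; intros j. apply Rmult_le_compat_r; [apply Rabs_pos|apply H].
Qed.

Lemma mat_bound n (M : mat n) : exists b, 0 <= b /\ forall i j, Rabs (M i j) <= b.
Proof.
  destruct (fin_bound (fun p : 'I_n * 'I_n => M p.1 p.2)) as [b [Hb H]].
  exists b; split; auto. intros i j; exact (H (i, j)).
Qed.


Definition smallat k (F : vec k -> R) (x0 : vec k) : Prop :=
  forall eps, 0 < eps -> exists delta, 0 < delta /\
    forall y, vnorm (vsub y x0) < delta -> Rabs (F y) <= eps * vnorm (vsub y x0).
Definition lipat k (F : vec k -> R) (x0 : vec k) : Prop :=
  exists C delta, 0 <= C /\ 0 < delta /\
    forall y, vnorm (vsub y x0) < delta -> Rabs (F y) <= C * vnorm (vsub y x0).

Section Small.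
Variable k : nat.
Implicit Types F G : vec k -> R.

Lemma small_ext F G x : (forall y, F y = G y) -> smallat F x -> smallat G x.
Proof.
  intros E H eps Heps. destruct (H eps Heps) as [d [Hd H1]]. exists d; split; auto.
  intros y Hy; rewrite -E; auto.
Qed.

Lemma small_add F G x : smallat F x -> smallat G x -> smallat (fun y => F y + G y) x.
Proof.
  intros H1 H2 eps Heps.
  destruct (H1 (eps/2)) as [d1 [Hd1 K1]]; [lra|].
  destruct (H2 (eps/2)) as [d2 [Hd2 K2]]; [lra|].
  exists (Rmin d1 d2); split; [apply Rmin_pos; auto|].
  intros y Hy. pose proof (Rmin_l d1 d2); pose proof (Rmin_r d1 d2).
  specialize (K1 y ltac:(lra)); specialize (K2 y ltac:(lra)).
  eapply Rle_trans; [apply Rabs_triang|]. lra.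
Qed.

Lemma small_scal c F x : smallat F x -> smallat (fun y => c * F y) x.
Proof.
  intros H eps Heps. destruct (H (eps / (Rabs c + 1))) as [d [Hd K]].
  { apply Rdiv_lt_0_compat; [lra|]. pose proof (Rabs_pos c); lra. }
  exists d; split; auto. intros y Hy. specialize (K y Hy). rewrite Rabs_mult.
  pose proof (Rabs_pos c). pose proof (vnorm_ge0 (vsub y x)). pose proof (Rabs_pos (F y)).
  assert (Rabs c * Rabs (F y) <= Rabs c * (eps / (Rabs c + 1) * vnorm (vsub y x))) by (apply Rmult_le_compat_l; lra).
  assert (E : eps / (Rabs c + 1) * (Rabs c + 1) = eps) by (field; lra).
  assert (0 < eps / (Rabs c + 1)) by (apply Rdiv_lt_0_compat; lra).
  nra.
Qed.

Lemma small_opp F x : smallat F x -> smallat (fun y => - F y) x.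
Proof. intros H; apply (small_ext (F := fun y => (-1) * F y)); [intros; ring|]. apply small_scal; auto. Qed.

Lemma small_lip F x : smallat F x -> lipat F x.
Proof. intros H. destruct (H 1 Rlt_0_1) as [d [Hd K]]. exists 1, d; repeat split; auto; lra. Qed.

Lemma lip_add F G x : lipat F x -> lipat G x -> lipat (fun y => F y + G y) x.
Proof.
  intros [C1 [d1 [HC1 [Hd1 K1]]]] [C2 [d2 [HC2 [Hd2 K2]]]].
  exists (C1 + C2), (Rmin d1 d2); repeat split; [lra|apply Rmin_pos; auto|].
  intros y Hy. pose proof (Rmin_l d1 d2); pose proof (Rmin_r d1 d2).
  specialize (K1 y ltac:(lra)); specialize (K2 y ltac:(lra)).
  eapply Rle_trans; [apply Rabs_triang|]. lra.
Qed.

Lemma lip_sq F x : lipat F x -> smallat (fun y => F y ^ 2) x.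
Proof.
  intros [C [d [HC [Hd K]]]] eps Heps.
  exists (Rmin d (eps / (C * C + 1))); split.
  { apply Rmin_pos; auto. apply Rdiv_lt_0_compat; nra. }
  intros y Hy. pose proof (Rmin_l d (eps / (C * C + 1))); pose proof (Rmin_r d (eps / (C * C + 1))).
  specialize (K y ltac:(lra)). set (v := vnorm (vsub y x)) in *.
  pose proof (vnorm_ge0 (vsub y x)). fold v in H1.
  rewrite -RPow_abs. pose proof (Rabs_pos (F y)).
  assert (Rabs (F y) ^ 2 <= (C * v) ^ 2) by (apply pow_incrst_1 || nra).
  assert (E : eps / (C * C + 1) * (C * C + 1) = eps) by (field; nra).
  assert (v * (C * C + 1) <= eps) by nra.
  nra.
Qed.

End Small.

Definition evec k (i : 'I_k) (s : R) : vec k := fun j => if j == i then s else 0.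

Lemma dot_evec k (g : vec k) i s : dot g (evec i s) = g i * s.
Proof.
  unfold dot, evec. rewrite -(sumR_delta i (g i * s)). apply sumR_ext; intros j.
  case: (eqVneq j i) => [->|_]; ring.
Qed.

Lemma vnorm_evec k (i : 'I_k) s : vnorm (evec i s) = Rabs s.
Proof.
  unfold vnorm, dot, evec. rewrite -(sqrt_Rsqr_abs s). f_equal.
  rewrite -(sumR_delta i (Rsqr s)). apply sumR_ext; intros j.
  case: (eqVneq j i) => [_|_]; unfold Rsqr; ring.
Qed.

Lemma dot_sub_r k (g u v : vec k) : dot g (vsub u v) = dot g u - dot g v.
Proof. unfold dot, vsub. rewrite -sumR_sub. apply sumR_ext; intros; ring. Qed.

Lemma dot_comm k (u v : vec k) : dot u v = dot v u.
Proof. unfold dot. apply sumR_ext; intros; ring. Qed.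

Lemma small_dot_zero k (g : vec k) x : smallat (fun y => dot g (vsub y x)) x -> forall i, g i = 0.
Proof.
  intros H i. apply NNPP; intros Hg.
  assert (Hp : 0 < Rabs (g i) / 2) by (pose proof (Rabs_pos_lt _ Hg); lra).
  destruct (H _ Hp) as [d [Hd K]].
  set (y := fun j => x j + evec i (d/2) j).
  assert (Ey : vsub y x = evec i (d/2)).
  { apply functional_extensionality; intros j; unfold vsub, y; ring. }
  specialize (K y). rewrite Ey vnorm_evec dot_evec in K.
  rewrite Rabs_pos_eq in K; [|lra]. rewrite Rabs_mult (Rabs_pos_eq (d/2)) in K; [|lra].
  specialize (K ltac:(lra)). pose proof (Rabs_pos_lt _ Hg). nra.
Qed.

Lemma grad_unique k (F : vec k -> R) x g1 g2 : has_grad F x g1 -> has_grad F x g2 -> forall i, g1 i = g2 i.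
Proof.
  intros H1 H2 i.
  assert (smallat (fun y => dot (vsub g1 g2) (vsub y x)) x).
  { apply (small_ext (F := fun y => (- (F y - F x - dot g1 (vsub y x))) + (F y - F x - dot g2 (vsub y x)))).
    - intros y. transitivity (dot g1 (vsub y x) - dot g2 (vsub y x)); [ring|].
      unfold dot. rewrite -sumR_sub. apply sumR_ext; intros; unfold vsub; ring.
    - apply small_add; [apply small_opp|]; assumption. }
  pose proof (small_dot_zero H i). unfold vsub in H0. lra.
Qed.


Definition gq n (Q : mat n) (b x : vec n) : vec n :=
  fun i => sumR (fun j => (Q i j + Q j i) * x j) + b i.

Lemma quad_id n (Q : mat n) (b x y : vec n) :
  bilin Q y y + dot b y = bilin Q x x + dot b x + dot (gq Q b x) (vsub y x) + bilin Q (vsub y x) (vsub y x).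
Proof.
  set d := vsub y x.
  have Hy : forall i, y i = x i + d i by (intros i; unfold d, vsub; ring).
  have E1 : bilin Q y y - bilin Q x x - bilin Q d d =
     sumR (fun i => sumR (fun j => x i * Q i j * d j + d i * Q i j * x j)).
  { unfold bilin. rewrite -!sumR_sub. apply sumR_ext; intros i. rewrite -!sumR_sub.
    apply sumR_ext; intros j. rewrite !Hy; ring. }
  have E2 : sumR (fun i => sumR (fun j => x i * Q i j * d j)) =
            sumR (fun i => sumR (fun j => Q j i * x j * d i)).
  { rewrite sumR_swap. apply sumR_ext; intros i; apply sumR_ext; intros j; ring. }
  have E3 : dot (gq Q b x) d = sumR (fun i => sumR (fun j => Q j i * x j * d i)) + sumR (fun i => sumR (fun j => d i * Q i j * x j)) + dot b d.
  { unfold dot, gq. rewrite -!sumR_add. apply sumR_ext; intros i.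
    rewrite -sumR_add Rmult_plus_distr_r -sumR_scalr. f_equal.
    apply sumR_ext; intros j; ring. }
  have E4 : sumR (fun i => sumR (fun j => x i * Q i j * d j + d i * Q i j * x j)) =
      sumR (fun i => sumR (fun j => x i * Q i j * d j)) + sumR (fun i => sumR (fun j => d i * Q i j * x j)).
  { rewrite -sumR_add. apply sumR_ext; intros i. apply sumR_add. }
  have E5 : dot b y = dot b x + dot b d.
  { unfold dot. rewrite -sumR_add. apply sumR_ext; intros i. rewrite Hy; ring. }
  lra.
Qed.

Lemma bilin_small n (Q : mat n) (x : vec n) : smallat (fun y => bilin Q (vsub y x) (vsub y x)) x.
Proof.
  destruct (mat_bound Q) as [b [Hb HQ]].
  intros eps Heps. set K := b * nR n * nR n + 1.
  assert (HK : 0 < K) by (unfold K; pose proof (nR_ge0 n); nra).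
  exists (eps / K); split; [apply Rdiv_lt_0_compat; lra|].
  intros y Hy. set v := vnorm (vsub y x) in Hy *.
  pose proof (bilin_bound (vsub y x) (vsub y x) HQ).
  pose proof (N1_le_vnorm (vsub y x)). pose proof (N1_ge0 (vsub y x)). fold v in H0.
  pose proof (nR_ge0 n). pose proof (vnorm_ge0 (vsub y x)). fold v in H3.
  assert (E : eps / K * K = eps) by (field; lra).
  assert (b * N1 (vsub y x) * N1 (vsub y x) <= b * (nR n * v) * (nR n * v)).
  { apply Rmult_le_compat; try nra; try (apply Rmult_le_compat_l; lra). }
  assert (v * K <= eps) by nra.
  unfold K in H5. nra.
Qed.

Lemma quad_grad n (Q : mat n) (b : vec n) (k : R) x :
  has_grad (fun y => bilin Q y y + dot b y + k) x (gq Q b x).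
Proof.
  apply (small_ext (F := fun y => bilin Q (vsub y x) (vsub y x))); [|apply bilin_small].
  intros y. pose proof (quad_id Q b x y). lra.
Qed.

Lemma dot_lip n (g x : vec n) : lipat (fun y => dot g (vsub y x)) x.
Proof.
  exists (N1 g * nR n), 1. pose proof (N1_ge0 g); pose proof (nR_ge0 n).
  repeat split; [nra|lra|]. intros y _.
  eapply Rle_trans; [apply dot_bound|]. rewrite Rmult_assoc. apply Rmult_le_compat_l; auto.
  apply N1_le_vnorm.
Qed.

Definition lipvec n k (L : vec n -> vec k) (x0 : vec n) : Prop :=
  exists C delta, 0 <= C /\ 0 < delta /\ forall y, vnorm (vsub y x0) < delta ->
    vnorm (vsub (L y) (L x0)) <= C * vnorm (vsub y x0).

Lemma comp_small n k (V : vec k -> R) (L : vec n -> vec k) x0 g :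
  has_grad V (L x0) g -> lipvec L x0 ->
  smallat (fun y => V (L y) - V (L x0) - dot g (vsub (L y) (L x0))) x0.
Proof.
  intros HV [C [d [HC [Hd HL]]]] eps Heps.
  destruct (HV (eps / (C + 1))) as [dV [HdV KV]]; [apply Rdiv_lt_0_compat; lra|].
  exists (Rmin d (dV / (C + 1))); split; [apply Rmin_pos; [lra|apply Rdiv_lt_0_compat; lra]|].
  intros y Hy. pose proof (Rmin_l d (dV / (C + 1))); pose proof (Rmin_r d (dV / (C + 1))).
  specialize (HL y ltac:(lra)). pose proof (vnorm_ge0 (vsub y x0)).
  assert (E1 : dV / (C + 1) * (C + 1) = dV) by (field; lra).
  assert (E2 : eps / (C + 1) * (C + 1) = eps) by (field; lra).
  assert (HLt : vnorm (vsub (L y) (L x0)) < dV) by nra.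
  specialize (KV _ HLt). pose proof (vnorm_ge0 (vsub (L y) (L x0))).
  assert (0 < eps / (C+1)) by (apply Rdiv_lt_0_compat; lra).
  assert (eps / (C + 1) * vnorm (vsub (L y) (L x0)) <= eps / (C + 1) * (C * vnorm (vsub y x0))).
  { apply Rmult_le_compat_l; lra. }
  assert (HH : eps / (C + 1) * (C * vnorm (vsub y x0)) <= eps / (C + 1) * ((C + 1) * vnorm (vsub y x0))).
  { apply Rmult_le_compat_l; lra. }
  rewrite -(Rmult_assoc _ (C + 1)) E2 in HH. lra.
Qed.

Lemma qeval_lip n k (L : qmap n k) x0 : lipvec (qeval L) x0.
Proof.
  destruct (fin_bound (fun p : 'I_k * 'I_n * 'I_n => qQ L p.1.1 p.1.2 p.2)) as [b [Hb HQ]].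
  destruct (fin_bound (fun j : 'I_k => N1 (gq (qQ L j) (qb L j) x0))) as [g [Hg HG]].
  pose proof (nR_ge0 n) as Hn. pose proof (nR_ge0 k) as Hk.
  exists (nR k * (g * nR n + b * nR n * nR n)), 1. repeat split.
  { apply Rmult_le_pos; [lra|]. apply Rplus_le_le_0_compat; [apply Rmult_le_pos|apply Rmult_le_pos; [apply Rmult_le_pos|]]; lra. }
  { lra. }
  intros y Hy. set v := vnorm (vsub y x0). pose proof (vnorm_ge0 (vsub y x0)). fold v in H, Hy.
  eapply Rle_trans; [apply vnorm_le_N1|]. unfold N1. unfold nR at 1. rewrite -!sumR_scalr.
  apply sumR_le; intros j. rewrite Rmult_1_l.
  have E : vsub (qeval L y) (qeval L x0) j =
     dot (gq (qQ L j) (qb L j) x0) (vsub y x0) + bilin (qQ L j) (vsub y x0) (vsub y x0).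
  { unfold vsub at 1, qeval. pose proof (quad_id (qQ L j) (qb L j) x0 y). lra. }
  rewrite E. eapply Rle_trans; [apply Rabs_triang|].
  pose proof (dot_bound (gq (qQ L j) (qb L j) x0) (vsub y x0)) as D1.
  assert (HQj : forall i i', Rabs (qQ L j i i') <= b) by (intros i i'; exact (HQ (j, i, i'))).
  pose proof (bilin_bound (vsub y x0) (vsub y x0) HQj) as D2.
  pose proof (N1_le_vnorm (vsub y x0)) as D3. fold v in D3. pose proof (N1_ge0 (vsub y x0)) as D4.
  specialize (HG j). simpl in HG. pose proof (N1_ge0 (gq (qQ L j) (qb L j) x0)) as D5.
  rewrite Rabs_pos_eq in HG; [|exact D5].
  revert D1 D2 D3 D4 D5 HG.
  generalize (N1 (vsub y x0)) (N1 (gq (qQ L j) (qb L j) x0)). intros N Gj D1 D2 D3 D4 D5 HG.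
  assert (Gj * N <= g * (nR n * v)) by (apply Rmult_le_compat; lra).
  assert (b * N * N <= b * (nR n * v) * (nR n * v)) by (apply Rmult_le_compat; try nra; try (apply Rmult_le_compat_l; lra)).
  assert (b * (nR n * v) * (nR n * v) <= b * nR n * nR n * v).
  { replace (b * (nR n * v) * (nR n * v)) with ((b * nR n * nR n) * (v * v)) by ring.
    apply Rmult_le_compat_l; [apply Rmult_le_pos; [apply Rmult_le_pos|]; lra|nra]. }
  nra.
Qed.


Lemma matvec_mx n (M : mat n) (v : 'rV[R]_n) i :
  matvec M (fun j => v ord0 j) i = ((v *m (\matrix_(i0, j0) M j0 i0))%R) ord0 i.
Proof.
  rewrite mxE. unfold matvec, sumR. apply eq_bigr => j _. rewrite mxE.
  change (M i j * v ord0 j = v ord0 j * M i j). apply Rmult_comm.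
Qed.

Lemma nonsing_solve n (M : mat n) : nonsingular M -> forall b : vec n, exists x : vec n, forall i, matvec M x i = b i.
Proof.
  intros HM b.
  set B : 'M[R]_n := (\matrix_(i0, j0) M j0 i0)%R.
  have Hdet : (\det B != 0)%R.
  { apply/negP => /det0P [v Hv0 HvB]. move/negP: Hv0; apply. apply/eqP/matrixP => i j.
    rewrite (ord1 i) mxE. apply (HM (fun j => v ord0 j)). intros k.
    rewrite matvec_mx HvB mxE. reflexivity. }
  have HU : B \in unitmx by rewrite unitmxE GRing.unitfE.
  exists (fun j => (((\row_k0 b k0) *m invmx B)%R) ord0 j). intros i.
  rewrite matvec_mx -/B -mulmxA mulVmx // mulmx1 mxE. reflexivity.
Qed.

Lemma nonsing_inv n (M : mat n) : nonsingular M -> exists N : mat n, forall d i, matvec N (matvec M d) i = d i.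
Proof.
  intros HM.
  set B : 'M[R]_n := (\matrix_(i0, j0) M j0 i0)%R.
  have Hdet : (\det B != 0)%R.
  { apply/negP => /det0P [v Hv0 HvB]. move/negP: Hv0; apply. apply/eqP/matrixP => i j.
    rewrite (ord1 i) mxE. apply (HM (fun j => v ord0 j)). intros k.
    rewrite matvec_mx HvB mxE. reflexivity. }
  have HU : B \in unitmx by rewrite unitmxE GRing.unitfE.
  exists (fun i j => invmx B j i). intros d i.
  set w : 'rV[R]_n := (\row_k0 d k0)%R.
  have Hw : forall j, matvec M d j = ((w *m B)%R) ord0 j.
  { intros j. rewrite -matvec_mx. unfold matvec; apply sumR_ext => k. rewrite /w mxE. reflexivity. }
  transitivity ((((w *m B) *m invmx B)%R) ord0 i).
  { rewrite mxE. unfold matvec, sumR. apply eq_bigr => j _. rewrite -Hw.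
    change (invmx B j i * matvec M d j = matvec M d j * invmx B j i). apply Rmult_comm. }
  rewrite -mulmxA mulmxV // mulmx1 /w mxE. reflexivity.
Qed.


Definition qmix n k (L : qmap n k) (s : vec k) : mat n := fun i i' => sumR (fun j => s j * qQ L j i i').
Definition bmix n k (L : qmap n k) (s : vec k) : vec n := fun i => sumR (fun j => s j * qb L j i).
Definition cmix n k (L : qmap n k) (s : vec k) : R := sumR (fun j => s j * qc L j).

Lemma dot_qeval n k (L : qmap n k) (x : vec n) (s : vec k) :
  dot (qeval L x) s = bilin (qmix L s) x x + dot (bmix L s) x + cmix L s.
Proof.
  have E1 : bilin (qmix L s) x x = sumR (fun j => s j * bilin (qQ L j) x x).
  { unfold bilin, qmix.
    transitivity (sumR (fun i => sumR (fun i' => sumR (fun j => s j * (x i * qQ L j i i' * x i'))))).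
    { apply sumR_ext => i; apply sumR_ext => i'. rewrite -sumR_scal -sumR_scalr.
      apply sumR_ext => j; ring. }
    transitivity (sumR (fun i => sumR (fun j => sumR (fun i' => s j * (x i * qQ L j i i' * x i'))))).
    { apply sumR_ext => i. apply sumR_swap. }
    rewrite sumR_swap. apply sumR_ext => j. rewrite -sumR_scal. apply sumR_ext => i.
    rewrite -sumR_scal. reflexivity. }
  have E2 : dot (bmix L s) x = sumR (fun j => s j * dot (qb L j) x).
  { unfold dot, bmix.
    transitivity (sumR (fun i => sumR (fun j => s j * (qb L j i * x i)))).
    { apply sumR_ext => i. rewrite -sumR_scalr. apply sumR_ext => j; ring. }
    rewrite sumR_swap. apply sumR_ext => j. rewrite -sumR_scal. reflexivity. }
  rewrite E1 E2. unfold cmix, dot at 1, qeval. rewrite -!sumR_add. apply sumR_ext => j. ring.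
Qed.

Lemma bilin_lin3 n (M1 M2 M3 : mat n) a b (x y : vec n) :
  bilin (fun i j => M1 i j + a * M2 i j + b * M3 i j) x y = bilin M1 x y + a * bilin M2 x y + b * bilin M3 x y.
Proof.
  unfold bilin. rewrite -!sumR_scal -!sumR_add. apply sumR_ext => i.
  rewrite -!sumR_scal -!sumR_add. apply sumR_ext => j. ring.
Qed.

Lemma dot_lin3 n (u v w x : vec n) a :
  dot (fun i => u i + a * v i - w i) x = dot u x + a * dot v x - dot w x.
Proof. unfold dot. rewrite -sumR_scal -sumR_add -sumR_sub. apply sumR_ext => i; ring. Qed.

Lemma qhess_mix n k (L : qmap n k) s i j : qhess L s i j = qmix L s i j + qmix L s j i.
Proof. unfold qhess, qmix. rewrite -sumR_add. apply sumR_ext => j'; ring. Qed.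

Lemma matvec_sub n (M : mat n) (u v : vec n) i : matvec M (vsub u v) i = matvec M u i - matvec M v i.
Proof. unfold matvec, vsub. rewrite -sumR_sub. apply sumR_ext => j; ring. Qed.

Lemma has_grad_ext k (F G : vec k -> R) x g g' :
  (forall y, F y = G y) -> (forall i, g i = g' i) -> has_grad F x g -> has_grad G x g'.
Proof.
  intros E1 E2 H. have -> : G = F by (apply functional_extensionality; intros; rewrite E1).
  have -> : g' = g by (apply functional_extensionality; intros; rewrite E2). exact H.
Qed.

Lemma dot_zero_l k (v : vec k) : dot (fun _ => 0) v = 0.
Proof. unfold dot. transitivity (sumR (fun _ : 'I_k => 0)); [apply sumR_ext => i; ring | apply sumR_0]. Qed.

Lemma Vstar_at k (V : vec k -> R) E Es gV gVinv xi :
  canonical_fun V E Es gV gVinv -> E xi -> Vstar V gVinv (gV xi) = dot (gV xi) xi - V xi.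
Proof. intros C Hx. unfold Vstar. rewrite (cf_inv_l C Hx). reflexivity. Qed.

Lemma lipvec_dot n k (L : vec n -> vec k) (g : vec k) x0 :
  lipvec L x0 -> lipat (fun y => dot g (vsub (L y) (L x0))) x0.
Proof.
  intros [C [d [HC [Hd H]]]]. exists (N1 g * nR k * C), d.
  pose proof (N1_ge0 g); pose proof (nR_ge0 k).
  repeat split; [apply Rmult_le_pos; [apply Rmult_le_pos|]; lra|lra|].
  intros y Hy. eapply Rle_trans; [apply dot_bound|].
  specialize (H y Hy). pose proof (N1_le_vnorm (vsub (L y) (L x0))).
  pose proof (N1_ge0 (vsub (L y) (L x0))).
  rewrite !Rmult_assoc. apply Rmult_le_compat_l; [lra|].
  eapply Rle_trans; [exact H2|]. apply Rmult_le_compat_l; lra.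
Qed.

Lemma convex_grad k (E : vec k -> Prop) V xi eta g :
  convex_on E V -> E xi -> E eta -> has_grad V xi g -> V xi + dot g (vsub eta xi) <= V eta.
Proof.
  intros [_ Hc] Hxi Heta Hg.
  set D := vsub eta xi. set a := V eta - V xi - dot g D.
  apply NNPP; intros Hneg. assert (Ha : 0 < - a) by (unfold a; lra).
  set nD := vnorm D. pose proof (vnorm_ge0 D) as HnD. fold nD in HnD.
  set eps := - a / (nD + 1).
  assert (Heps : 0 < eps) by (apply Rdiv_lt_0_compat; lra).
  destruct (Hg eps Heps) as [d [Hd K]].
  set t := Rmin 1 (d / (nD + 1)).
  assert (Ht0 : 0 < t) by (apply Rmin_pos; [lra|apply Rdiv_lt_0_compat; lra]).
  assert (Ht1 : t <= 1) by apply Rmin_l.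
  assert (Ht2 : t <= d / (nD + 1)) by apply Rmin_r.
  assert (Ed : d / (nD + 1) * (nD + 1) = d) by (field; lra).
  assert (Ee : eps * (nD + 1) = - a) by (unfold eps; field; lra).
  have Ez : vsub (vcomb t eta xi) xi = (fun i => t * D i).
  { apply functional_extensionality => i. unfold vsub, vcomb, D, vsub. ring. }
  specialize (K (vcomb t eta xi)). rewrite Ez vnorm_scal Rabs_pos_eq in K; [|lra].
  fold nD in K.
  assert (t * nD < d) by nra.
  specialize (K H).
  have Edt : dot g (fun i => t * D i) = t * dot g D.
  { unfold dot. rewrite -sumR_scal. apply sumR_ext => i; ring. }
  rewrite Edt in K.
  pose proof (Hc eta xi t Heta Hxi ltac:(lra)).
  assert (K1 : - (eps * (t * nD)) <= V (vcomb t eta xi) - V xi - t * dot g D).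
  { pose proof (Rle_abs (- (V (vcomb t eta xi) - V xi - t * dot g D))) as HH. rewrite Rabs_Ropp in HH. lra. }
  assert (t * (dot g D) - eps * (t * nD) <= t * (V eta - V xi)) by lra.
  assert (eps * nD < - a) by nra.
  assert (t * (dot g D - eps * nD) <= t * (V eta - V xi)) by lra.
  assert (dot g D - eps * nD <= V eta - V xi).
  { apply Rmult_le_reg_l with t; lra. }
  unfold a in *. lra.
Qed.

Lemma mix_bound k (T : finType) (F : 'I_k -> T -> R) :
  exists b, 0 <= b /\ forall s x, Rabs (sumR (fun j => s j * F j x)) <= b * N1 s.
Proof.
  destruct (fin_bound (fun p : 'I_k * T => F p.1 p.2)) as [b [Hb H]].
  exists b; split; auto. intros s x.
  eapply Rle_trans; [apply sumR_abs|]. unfold N1. rewrite -sumR_scal.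
  apply sumR_le => j. rewrite Rabs_mult Rmult_comm. apply Rmult_le_compat_r; [apply Rabs_pos|].
  exact (H (j, x)).
Qed.

Lemma qmix_bound n k (L : qmap n k) : exists b, 0 <= b /\ forall s i j, Rabs (qmix L s i j) <= b * N1 s.
Proof.
  destruct (mix_bound (fun j (p : 'I_n * 'I_n) => qQ L j p.1 p.2)) as [b [Hb H]].
  exists b; split; [exact Hb|]. intros s i j. exact (H s (i, j)).
Qed.

Lemma bmix_bound n k (L : qmap n k) : exists b, 0 <= b /\ forall s i, Rabs (bmix L s i) <= b * N1 s.
Proof.
  destruct (mix_bound (fun j (i : 'I_n) => qb L j i)) as [b [Hb H]].
  exists b; split; [exact Hb|]. intros s i. exact (H s i).
Qed.

Lemma qmix_sub n k (L : qmap n k) s s' i j : qmix L s' i j - qmix L s i j = qmix L (vsub s' s) i j.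
Proof. unfold qmix, vsub. rewrite -sumR_sub. apply sumR_ext => j'; ring. Qed.

Lemma bmix_sub n k (L : qmap n k) s s' i : bmix L s' i - bmix L s i = bmix L (vsub s' s) i.
Proof. unfold bmix, vsub. rewrite -sumR_sub. apply sumR_ext => j'; ring. Qed.

Lemma qmix_add n k (L : qmap n k) s s' i j : qmix L s' i j = qmix L s i j + qmix L (vsub s' s) i j.
Proof. rewrite -qmix_sub. ring. Qed.

Lemma N1_vnorm_d3 k (u : vec k) D : vnorm u <= D -> N1 u <= nR k * D.
Proof. intros H. eapply Rle_trans; [apply N1_le_vnorm|]. apply Rmult_le_compat_l; [apply nR_ge0|auto]. Qed.

Lemma dist3_ge0 kf l t t' (sf sf' : vec kf) (sh sh' : vec l) : 0 <= dist3 t t' sf sf' sh sh'.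
Proof. apply sqrt_pos. Qed.

Lemma dist3_t kf l t t' (sf sf' : vec kf) (sh sh' : vec l) : Rabs (t' - t) <= dist3 t t' sf sf' sh sh'.
Proof.
  unfold dist3. rewrite -sqrt_Rsqr_abs. apply sqrt_le_1_alt. unfold Rsqr.
  pose proof (dot_ge0 (vsub sf' sf)); pose proof (dot_ge0 (vsub sh' sh)); pose proof (pow2_ge_0 (t' - t)). lra.
Qed.

Lemma dist3_sf kf l t t' (sf sf' : vec kf) (sh sh' : vec l) : vnorm (vsub sf' sf) <= dist3 t t' sf sf' sh sh'.
Proof.
  unfold dist3, vnorm. apply sqrt_le_1_alt.
  pose proof (dot_ge0 (vsub sf' sf)); pose proof (dot_ge0 (vsub sh' sh)); pose proof (pow2_ge_0 (t' - t)). lra.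
Qed.

Lemma dist3_sh kf l t t' (sf sf' : vec kf) (sh sh' : vec l) : vnorm (vsub sh' sh) <= dist3 t t' sf sf' sh sh'.
Proof.
  unfold dist3, vnorm. apply sqrt_le_1_alt.
  pose proof (dot_ge0 (vsub sf' sf)); pose proof (dot_ge0 (vsub sh' sh)); pose proof (pow2_ge_0 (t' - t)). lra.
Qed.

Lemma N1_matvec_le n (M : mat n) b (v : vec n) : (forall i j, Rabs (M i j) <= b) ->
  N1 (matvec M v) <= (nR n * b) * N1 v.
Proof. intros H. rewrite Rmult_assoc. apply matvec_N1; auto. Qed.
Lemma abs3 a b c d e A B C D E :
  Rabs a <= A -> Rabs b <= B -> Rabs c <= C -> Rabs d <= D -> Rabs e <= E ->
  Rabs (a + b * c + d * e) <= A + B * C + D * E.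
Proof.
  intros H1 H2 H3 H4 H5.
  eapply Rle_trans; [apply Rabs_triang|]. eapply Rle_trans; [apply Rplus_le_compat_r; apply Rabs_triang|].
  rewrite !Rabs_mult.
  pose proof (Rabs_pos b); pose proof (Rabs_pos c); pose proof (Rabs_pos d); pose proof (Rabs_pos e).
  assert (Rabs b * Rabs c <= B * C) by (apply Rmult_le_compat; lra).
  assert (Rabs d * Rabs e <= D * E) by (apply Rmult_le_compat; lra).
  lra.
Qed.

Lemma N1_const_bound n (v : vec n) c : (forall i, Rabs (v i) <= c) -> N1 v <= nR n * c.
Proof.
  intros H. unfold nR. rewrite -sumR_scalr. apply sumR_le => i. rewrite Rmult_1_l. apply H.
Qed.

Lemma bmix_add n k (L : qmap n k) s s' i : bmix L s' i = bmix L s i + bmix L (vsub s' s) i.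
Proof. rewrite -bmix_sub. ring. Qed.

Section Prob.
Variables (n kf l : nat) (A : mat n) (c : vec n)
  (Lf : qmap n kf) (Vf : vec kf -> R) (Ef Efs : vec kf -> Prop)
  (gVf gVfinv : vec kf -> vec kf)
  (Lh : qmap n l) (Vh : vec l -> R) (Eh Ehs : vec l -> Prop)
  (gVh gVhinv : vec l -> vec l)
  (nu mu : R) (xbar : vec n).
Hypothesis HA : msymmetric A.
Hypothesis Cf : canonical_fun Vf Ef Efs gVf gVfinv.
Hypothesis Ch : canonical_fun Vh Eh Ehs gVh gVhinv.
Hypothesis HEf : forall x, Ef (qeval Lf x).
Hypothesis HEh : forall x, Eh (qeval Lh x).
Hypothesis Hnu : 0 < nu.
Hypothesis Hst : x_stationary (Laug A c Lf Vf Lh Vh nu mu) xbar.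

Definition Xi := Xi1 A c Lf Vf gVfinv Lh Vh gVhinv nu mu.
Definition GG := Gmat A Lf Lh mu.

Definition QX t sf sh : mat n := fun i j => qmix Lf sf i j + (mu + t) * qmix Lh sh i j + / 2 * A i j.
Definition bX t sf sh : vec n := fun i => bmix Lf sf i + (mu + t) * bmix Lh sh i - c i.
Definition kX t sf sh : R := cmix Lf sf - Vstar Vf gVfinv sf + (mu + t) * (cmix Lh sh - Vstar Vh gVhinv sh) - nu / 2 * t ^ 2.

Lemma Xi_quad x t sf sh : Xi x t sf sh = bilin (QX t sf sh) x x + dot (bX t sf sh) x + kX t sf sh.
Proof.
  unfold Xi, Xi1, QX, bX, kX. rewrite bilin_lin3 dot_lin3 !dot_qeval. ring.
Qed.

Lemma G_QX t sf sh i j : GG t sf sh i j = QX t sf sh i j + QX t sf sh j i.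
Proof.
  unfold GG, Gmat, QX. rewrite !qhess_mix (HA j i). field.
Qed.

Definition Xg x t sf sh : vec n := fun i => matvec (GG t sf sh) x i + bX t sf sh i.

Lemma gq_QX x t sf sh i : gq (QX t sf sh) (bX t sf sh) x i = Xg x t sf sh i.
Proof.
  unfold gq, Xg, matvec. f_equal. apply sumR_ext => j. rewrite G_QX. reflexivity.
Qed.

Lemma Xi_grad x t sf sh : has_grad (fun y => Xi y t sf sh) x (Xg x t sf sh).
Proof.
  eapply has_grad_ext; [| apply gq_QX | apply quad_grad].
  intros y; simpl. rewrite Xi_quad. reflexivity.
Qed.

Lemma Xi_quad_id x y t sf sh :
  Xi y t sf sh = Xi x t sf sh + dot (Xg x t sf sh) (vsub y x) + bilin (QX t sf sh) (vsub y x) (vsub y x).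
Proof.
  rewrite !Xi_quad. pose proof (quad_id (QX t sf sh) (bX t sf sh) x y).
  have -> : Xg x t sf sh = gq (QX t sf sh) (bX t sf sh) x.
  { apply functional_extensionality => i. rewrite gq_QX. reflexivity. }
  lra.
Qed.

Lemma stat_iff x t sf sh :
  x_stationary (fun y => Xi1 A c Lf Vf gVfinv Lh Vh gVhinv nu mu y t sf sh) x <-> forall i, Xg x t sf sh i = 0.
Proof.
  split.
  - intros H i. pose proof (Xi_grad x t sf sh). symmetry. exact (grad_unique H H0 i).
  - intros H. have E : Xg x t sf sh = (fun _ => 0) by (apply functional_extensionality; auto).
    unfold x_stationary. pose proof (Xi_grad x t sf sh). rewrite E in H0. exact H0.
Qed.

Lemma Pd_spec t sf sh : (exists x, forall i, Xg x t sf sh i = 0) ->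
  exists x, (forall i, Xg x t sf sh i = 0) /\
     Pd A c Lf Vf gVfinv Lh Vh gVhinv nu mu t sf sh = Xi x t sf sh.
Proof.
  intros [x0 Hx0]. unfold Pd.
  set P := (fun x => x_stationary (fun y => Xi1 A c Lf Vf gVfinv Lh Vh gVhinv nu mu y t sf sh) x).
  have HP : exists x, P x by (exists x0; apply stat_iff; auto).
  pose proof (epsilon_spec (inhabits (fun _ : 'I_n => 0)) P HP) as Hs.
  eexists; split; [apply stat_iff; exact Hs| reflexivity].
Qed.

Lemma bilin_QX_G t sf sh d : 2 * bilin (QX t sf sh) d d = bilin (GG t sf sh) d d.
Proof.
  have E : bilin (QX t sf sh) d d = bilin (fun i j => QX t sf sh j i) d d.
  { unfold bilin. rewrite sumR_swap. apply sumR_ext => i; apply sumR_ext => j; ring. }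
  transitivity (bilin (QX t sf sh) d d + bilin (fun i j => QX t sf sh j i) d d); [lra|].
  unfold bilin. rewrite -sumR_add. apply sumR_ext => i. rewrite -sumR_add. apply sumR_ext => j.
  rewrite G_QX. ring.
Qed.


Definition xif := qeval Lf xbar.
Definition xih := qeval Lh xbar.
Definition h0 := Vh xih.
Definition taub := hcon Lh Vh xbar / nu.
Definition sfb := gVf xif.
Definition shb := gVh xih.

Lemma Xi_xbar : Xi xbar taub sfb shb = Laug A c Lf Vf Lh Vh nu mu xbar.
Proof.
  unfold Xi, Xi1, Laug, fobj, taub, sfb, shb, xif, xih, hcon.
  rewrite (Vstar_at Cf (HEf xbar)) (Vstar_at Ch (HEh xbar)).
  rewrite (dot_comm (qeval Lf xbar)) (dot_comm (qeval Lh xbar)). field. lra.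
Qed.

Lemma partE : forall i, Xg xbar taub sfb shb i = 0.
Proof.
  have Hf : has_grad Vf xif sfb by (apply (cf_diff Cf); apply HEf).
  have Hh : has_grad Vh xih shb by (apply (cf_diff Ch); apply HEh).
  pose proof (comp_small Hf (qeval_lip Lf xbar)) as Sphi.
  pose proof (comp_small Hh (qeval_lip Lh xbar)) as Su.
  pose proof (lipvec_dot shb (qeval_lip Lh xbar)) as Ls.
  set phi := fun y => Vf (qeval Lf y) - Vf (qeval Lf xbar) - dot sfb (vsub (qeval Lf y) (qeval Lf xbar)).
  set u := fun y => Vh (qeval Lh y) - Vh (qeval Lh xbar) - dot shb (vsub (qeval Lh y) (qeval Lh xbar)).
  set s := fun y => dot shb (vsub (qeval Lh y) (qeval Lh xbar)).
  fold phi in Sphi. fold u in Su. fold s in Ls.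
  have Lsu : lipat (fun y => s y + u y) xbar by (apply lip_add; [exact Ls|apply small_lip; exact Su]).
  pose proof (lip_sq Lsu) as Ssq.
  have HX : has_grad (fun y => Xi y taub sfb shb) xbar (fun _ => 0).
  { unfold has_grad.
    have S1 := small_add (small_add (small_add Hst (small_opp Sphi)) (small_scal (- (mu + taub)) Su))
                 (small_scal (- / (2 * nu)) Ssq).
    eapply small_ext; [|exact S1]. intros y. simpl. rewrite !dot_zero_l.
    unfold phi, u, s, Xi, Xi1, Laug, fobj, taub, sfb, shb, xif, xih, hcon.
    rewrite !dot_sub_r.
    rewrite (dot_comm (qeval Lf y)) (dot_comm (qeval Lf xbar)) (dot_comm (qeval Lh y)) (dot_comm (qeval Lh xbar)).
    field. lra. }
  intros i. pose proof (Xi_grad xbar taub sfb shb) as HG.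
  exact (grad_unique HG HX i).
Qed.

Lemma part2 : convex_on Ef Vf -> convex_on Eh Vh -> 0 < mu + taub ->
     posdef (GG taub sfb shb) ->
     forall y : vec n, Laug A c Lf Vf Lh Vh nu mu xbar <= Laug A c Lf Vf Lh Vh nu mu y.
Proof.
  intros Cvf Cvh Hmt Hpd y.
  rewrite -Xi_xbar.
  have Q := Xi_quad_id xbar y taub sfb shb.
  have E0 : dot (Xg xbar taub sfb shb) (vsub y xbar) = 0.
  { rewrite -(dot_zero_l (vsub y xbar)). unfold dot. apply sumR_ext => i. rewrite partE. reflexivity. }
  have B0 : 0 <= bilin (QX taub sfb shb) (vsub y xbar) (vsub y xbar).
  { have E2 := bilin_QX_G taub sfb shb (vsub y xbar).
    destruct (classic (exists i, vsub y xbar i <> 0)) as [Hex|Hno].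
    - specialize (Hpd _ Hex). lra.
    - have Hz : forall i, vsub y xbar i = 0.
      { intros i. apply NNPP; intros Hi; apply Hno; exists i; auto. }
      have -> : bilin (QX taub sfb shb) (vsub y xbar) (vsub y xbar) = 0.
      { unfold bilin. transitivity (sumR (fun _ : 'I_n => 0)); [|apply sumR_0].
        apply sumR_ext => i. transitivity (sumR (fun _ : 'I_n => 0)); [|apply sumR_0].
        apply sumR_ext => j. rewrite Hz; ring. }
      lra. }
  have Ineq1 : Xi y taub sfb shb <= Laug A c Lf Vf Lh Vh nu mu y.
  { have Gf := convex_grad Cvf (HEf xbar) (HEf y) (cf_diff Cf (HEf xbar)).
    have Gh := convex_grad Cvh (HEh xbar) (HEh y) (cf_diff Ch (HEh xbar)).
    unfold Xi, Xi1, Laug, fobj, hcon. fold sfb shb.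
    unfold sfb, shb, xif, xih.
    rewrite (Vstar_at Cf (HEf xbar)) (Vstar_at Ch (HEh xbar)).
    rewrite !dot_sub_r in Gf Gh.
    rewrite (dot_comm (qeval Lf y)) (dot_comm (qeval Lh y)).
    set t := taub in Hmt |- *. set hy := Vh (qeval Lh y) in Gh |- *.
    assert (Ht : t * hy - nu / 2 * t ^ 2 <= / (2 * nu) * hy ^ 2).
    { assert (E : / (2 * nu) * hy ^ 2 - (t * hy - nu / 2 * t ^ 2) = / (2 * nu) * (hy - nu * t) ^ 2) by (field; lra).
      assert (0 <= / (2 * nu) * (hy - nu * t) ^ 2).
      { apply Rmult_le_pos; [left; apply Rinv_0_lt_compat; lra| apply pow2_ge_0]. }
      lra. }
    assert (Hh2 : (mu + t) * (dot (gVh (qeval Lh xbar)) (qeval Lh y) - (dot (gVh (qeval Lh xbar)) (qeval Lh xbar) - Vh (qeval Lh xbar))) <= (mu + t) * hy).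
    { apply Rmult_le_compat_l; [lra|]. lra. }
    lra. }
  lra.
Qed.

Lemma Pd0 : nonsingular (GG taub sfb shb) ->
  Pd A c Lf Vf gVfinv Lh Vh gVhinv nu mu taub sfb shb = Xi xbar taub sfb shb.
Proof.
  intros HG.
  destruct (Pd_spec (ex_intro _ xbar partE)) as [x [Hx ->]].
  have Ex : forall i, vsub x xbar i = 0.
  { apply HG. intros i. rewrite matvec_sub.
    pose proof (Hx i) as H1. pose proof (partE i) as H2. unfold Xg in H1, H2. lra. }
  have -> : x = xbar by (apply functional_extensionality => i; pose proof (Ex i); unfold vsub in H; lra).
  reflexivity.
Qed.

Lemma term1 : forall e, 0 < e -> exists dl, 0 < dl /\ forall t' sf' sh',
  dist3 taub t' sfb sf' shb sh' < dl -> dist3 taub t' sfb sf' shb sh' <= 1 ->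
  Rabs (Xi xbar t' sf' sh' - Xi xbar taub sfb shb) <=
     e * dist3 taub t' sfb sf' shb sh' + nu / 2 * dist3 taub t' sfb sf' shb sh' ^ 2.
Proof.
  intros e He.
  set m0 := Rabs (mu + taub) + 1.
  have Hm0 : 0 < m0 by (unfold m0; pose proof (Rabs_pos (mu + taub)); lra).
  set e1 := e / (m0 + 1).
  have He1 : 0 < e1 by (apply Rdiv_lt_0_compat; lra).
  have Hsf : Efs sfb by (apply (cf_maps Cf); apply HEf).
  have Hsh : Ehs shb by (apply (cf_maps Ch); apply HEh).
  destruct (cf_conj_diff Cf Hsf He1) as [df [Hdf Kf]].
  destruct (cf_conj_diff Ch Hsh He1) as [dh [Hdh Kh]].
  exists (Rmin df dh); split; [apply Rmin_pos; auto|].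
  intros t' sf' sh' Hd Hd1.
  set D := dist3 taub t' sfb sf' shb sh' in Hd Hd1 |- *.
  pose proof (Rmin_l df dh); pose proof (Rmin_r df dh).
  pose proof (dist3_t taub t' sfb sf' shb sh') as Dt.
  pose proof (dist3_sf taub t' sfb sf' shb sh') as Df.
  pose proof (dist3_sh taub t' sfb sf' shb sh') as Dh.
  fold D in Dt, Df, Dh.
  specialize (Kf sf' ltac:(lra)). specialize (Kh sh' ltac:(lra)).
  set Rf := Vstar Vf gVfinv sf' - Vstar Vf gVfinv sfb - dot (gVfinv sfb) (vsub sf' sfb) in Kf.
  set Rh := Vstar Vh gVhinv sh' - Vstar Vh gVhinv shb - dot (gVhinv shb) (vsub sh' shb) in Kh.
  have Id : Xi xbar t' sf' sh' - Xi xbar taub sfb shb = - Rf - (mu + t') * Rh - nu / 2 * (t' - taub) ^ 2.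
  { unfold Rf, Rh, Xi, Xi1, sfb, shb.
    rewrite (cf_inv_l Cf (HEf xbar)) (cf_inv_l Ch (HEh xbar)).
    rewrite (Vstar_at Cf (HEf xbar)) (Vstar_at Ch (HEh xbar)).
    rewrite !dot_sub_r. fold xif xih.
    rewrite (dot_comm xif sf') (dot_comm xih sh') (dot_comm xif (gVf xif)) (dot_comm xih (gVh xih)).
    unfold taub, hcon. fold xih. field. lra. }
  rewrite Id.
  have Hmt : Rabs (mu + t') <= m0.
  { unfold m0. replace (mu + t') with ((mu + taub) + (t' - taub)) by ring.
    eapply Rle_trans; [apply Rabs_triang|]. lra. }
  have Ht2 : (t' - taub) ^ 2 <= D ^ 2.
  { rewrite -(pow2_abs (t' - taub)). pose proof (Rabs_pos (t' - taub)). nra. }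
  pose proof (vnorm_ge0 (vsub sf' sfb)). pose proof (vnorm_ge0 (vsub sh' shb)).
  assert (A1 : Rabs Rf <= e1 * D) by (eapply Rle_trans; [exact Kf|]; apply Rmult_le_compat_l; lra).
  assert (A2 : Rabs Rh <= e1 * D) by (eapply Rle_trans; [exact Kh|]; apply Rmult_le_compat_l; lra).
  assert (A3 : Rabs ((mu + t') * Rh) <= m0 * (e1 * D)).
  { rewrite Rabs_mult. apply Rmult_le_compat; try apply Rabs_pos; lra. }
  assert (E1 : e1 * (m0 + 1) = e) by (unfold e1; field; lra).
  pose proof (dist3_ge0 taub t' sfb sf' shb sh') as HD. fold D in HD.
  assert (A4 : 0 <= nu / 2 * (t' - taub) ^ 2) by (pose proof (pow2_ge_0 (t' - taub)); nra).
  eapply Rle_trans; [apply Rabs_triang|].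
  rewrite Rabs_Ropp. rewrite (Rabs_pos_eq (nu / 2 * (t' - taub) ^ 2)); [|lra].
  eapply Rle_trans; [apply Rplus_le_compat_r; apply Rabs_triang|]. rewrite Rabs_Ropp.
  assert (nu / 2 * (t' - taub) ^ 2 <= nu / 2 * D ^ 2) by (apply Rmult_le_compat_l; lra).
  rewrite Rabs_Ropp.
  assert (e1 * D + m0 * (e1 * D) = e * D) by (rewrite -E1; ring).
  lra.
Qed.

Lemma part1 : nonsingular (GG taub sfb shb) ->
  stationary3 (Pd A c Lf Vf gVfinv Lh Vh gVhinv nu mu) taub sfb shb.
Proof.
  intros HG eps Heps.
  set G0 := GG taub sfb shb.
  destruct (nonsing_inv HG) as [N HN].
  destruct (mat_bound N) as [bN [HbN HNb]].
  set K0 := nR n * bN.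
  have HK0 : 0 <= K0 by (unfold K0; pose proof (nR_ge0 n); nra).
  have Hinv : forall d, N1 d <= K0 * N1 (matvec G0 d).
  { intros d. have -> : N1 d = N1 (matvec N (matvec G0 d)) by (unfold N1; apply sumR_ext => i; rewrite HN).
    apply N1_matvec_le. exact HNb. }
  destruct (qmix_bound Lf) as [bqf [Hbqf Hqf]].
  destruct (qmix_bound Lh) as [bqh [Hbqh Hqh]].
  destruct (bmix_bound Lf) as [bbf [Hbbf Hbf]].
  destruct (bmix_bound Lh) as [bbh [Hbbh Hbh]].
  destruct (mat_bound A) as [bA [HbA HAb]].
  pose proof (nR_ge0 n) as Hn. pose proof (nR_ge0 kf) as Hkf. pose proof (nR_ge0 l) as Hl.
  pose proof (N1_ge0 sfb) as Nf0. pose proof (N1_ge0 shb) as Nh0. pose proof (N1_ge0 xbar) as Nx.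
  set m0 := Rabs (mu + taub) + 1.
  have Hm0 : 0 < m0 by (unfold m0; pose proof (Rabs_pos (mu + taub)); lra).
  set Cg := 2 * bqf * nR kf + m0 * (2 * bqh * nR l) + 2 * bqh * N1 shb.
  have HCg : 0 <= Cg.
  { unfold Cg. assert (0 <= bqf * nR kf) by nra. assert (0 <= bqh * nR l) by nra.
    assert (0 <= bqh * N1 shb) by nra. nra. }
  set Cb := bbf * nR kf + m0 * (bbh * nR l) + bbh * N1 shb.
  have HCb : 0 <= Cb.
  { unfold Cb. assert (0 <= bbf * nR kf) by nra. assert (0 <= bbh * nR l) by nra.
    assert (0 <= bbh * N1 shb) by nra. nra. }
  set C1 := nR n * (Cg * N1 xbar + Cb).
  have HC1 : 0 <= C1 by (unfold C1; apply Rmult_le_pos; [lra|]; nra).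
  set CQ := bqf * (N1 sfb + nR kf) + m0 * (bqh * (N1 shb + nR l)) + / 2 * bA.
  have HCQ : 0 <= CQ.
  { unfold CQ. assert (0 <= bqf * (N1 sfb + nR kf)) by nra. assert (0 <= bqh * (N1 shb + nR l)) by nra. nra. }
  have Basic : forall t' sf' sh', dist3 taub t' sfb sf' shb sh' <= 1 ->
     Rabs (mu + t') <= m0 /\ N1 (vsub sf' sfb) <= nR kf * dist3 taub t' sfb sf' shb sh' /\
     N1 (vsub sh' shb) <= nR l * dist3 taub t' sfb sf' shb sh'.
  { intros t' sf' sh' H1. split; [|split].
    - unfold m0. replace (mu + t') with ((mu + taub) + (t' - taub)) by ring.
      eapply Rle_trans; [apply Rabs_triang|]. pose proof (dist3_t taub t' sfb sf' shb sh'). lra.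
    - apply N1_vnorm_d3. apply dist3_sf.
    - apply N1_vnorm_d3. apply dist3_sh. }
  have BG : forall t' sf' sh', dist3 taub t' sfb sf' shb sh' <= 1 -> forall i j,
      Rabs (GG t' sf' sh' i j - G0 i j) <= Cg * dist3 taub t' sfb sf' shb sh'.
  { intros t' sf' sh' H1 i j. destruct (Basic t' sf' sh' H1) as [B1 [B2 B3]].
    set D := dist3 taub t' sfb sf' shb sh' in H1 B2 B3 |- *.
    pose proof (dist3_t taub t' sfb sf' shb sh') as Dt. fold D in Dt.
    have Id : GG t' sf' sh' i j - G0 i j =
       (qmix Lf (vsub sf' sfb) i j + qmix Lf (vsub sf' sfb) j i)
       + (mu + t') * (qmix Lh (vsub sh' shb) i j + qmix Lh (vsub sh' shb) j i)
       + (t' - taub) * (qmix Lh shb i j + qmix Lh shb j i).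
    { unfold G0, GG, Gmat. rewrite !qhess_mix.
      rewrite (qmix_add Lf sfb sf' i j) (qmix_add Lf sfb sf' j i) (qmix_add Lh shb sh' i j) (qmix_add Lh shb sh' j i).
      ring. }
    rewrite Id.
    replace (Cg * D) with (2 * bqf * (nR kf * D) + m0 * (2 * bqh * (nR l * D)) + D * (2 * bqh * N1 shb)) by (unfold Cg; ring).
    apply abs3; auto.
    - eapply Rle_trans; [apply Rabs_triang|].
      pose proof (Hqf (vsub sf' sfb) i j); pose proof (Hqf (vsub sf' sfb) j i).
      assert (bqf * N1 (vsub sf' sfb) <= bqf * (nR kf * D)) by (apply Rmult_le_compat_l; lra). lra.
    - eapply Rle_trans; [apply Rabs_triang|].
      pose proof (Hqh (vsub sh' shb) i j); pose proof (Hqh (vsub sh' shb) j i).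
      assert (bqh * N1 (vsub sh' shb) <= bqh * (nR l * D)) by (apply Rmult_le_compat_l; lra). lra.
    - eapply Rle_trans; [apply Rabs_triang|].
      pose proof (Hqh shb i j); pose proof (Hqh shb j i). lra. }
  have Bb : forall t' sf' sh', dist3 taub t' sfb sf' shb sh' <= 1 -> forall i,
      Rabs (bX t' sf' sh' i - bX taub sfb shb i) <= Cb * dist3 taub t' sfb sf' shb sh'.
  { intros t' sf' sh' H1 i. destruct (Basic t' sf' sh' H1) as [B1 [B2 B3]].
    set D := dist3 taub t' sfb sf' shb sh' in H1 B2 B3 |- *.
    pose proof (dist3_t taub t' sfb sf' shb sh') as Dt. fold D in Dt.
    have Id : bX t' sf' sh' i - bX taub sfb shb i =
       bmix Lf (vsub sf' sfb) i + (mu + t') * bmix Lh (vsub sh' shb) i + (t' - taub) * bmix Lh shb i.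
    { unfold bX. rewrite (bmix_add Lf sfb sf' i) (bmix_add Lh shb sh' i). ring. }
    rewrite Id.
    replace (Cb * D) with (bbf * (nR kf * D) + m0 * (bbh * (nR l * D)) + D * (bbh * N1 shb)) by (unfold Cb; ring).
    apply abs3; auto.
    - eapply Rle_trans; [apply Hbf|]. apply Rmult_le_compat_l; lra.
    - eapply Rle_trans; [apply Hbh|]. apply Rmult_le_compat_l; lra. }
  have BQ : forall t' sf' sh', dist3 taub t' sfb sf' shb sh' <= 1 -> forall i j,
      Rabs (QX t' sf' sh' i j) <= CQ.
  { intros t' sf' sh' H1 i j. destruct (Basic t' sf' sh' H1) as [B1 [B2 B3]].
    set D := dist3 taub t' sfb sf' shb sh' in H1 B2 B3 |- *.
    unfold QX, CQ. rewrite (qmix_add Lf sfb sf' i j) (qmix_add Lh shb sh' i j).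
    apply abs3.
    - eapply Rle_trans; [apply Rabs_triang|].
      pose proof (Hqf sfb i j); pose proof (Hqf (vsub sf' sfb) i j).
      assert (bqf * N1 (vsub sf' sfb) <= bqf * (nR kf * D)) by (apply Rmult_le_compat_l; lra).
      assert (bqf * (nR kf * D) <= bqf * nR kf) by (assert (0 <= bqf * nR kf) by nra; nra). nra.
    - exact B1.
    - eapply Rle_trans; [apply Rabs_triang|].
      pose proof (Hqh shb i j); pose proof (Hqh (vsub sh' shb) i j).
      assert (bqh * N1 (vsub sh' shb) <= bqh * (nR l * D)) by (apply Rmult_le_compat_l; lra).
      assert (bqh * (nR l * D) <= bqh * nR l) by (assert (0 <= bqh * nR l) by nra; nra). nra.
    - right. apply Rabs_pos_eq. left. apply Rinv_0_lt_compat. lra.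
    - apply HAb. }
  destruct (term1 (e := eps / 2) ltac:(lra)) as [d1 [Hd1 T1]].
  set dp := 1 / (2 * (K0 * (nR n * Cg) + 1)).
  have Hkc : 0 <= K0 * (nR n * Cg) by (apply Rmult_le_pos; [lra|]; nra).
  have Hdp : 0 < dp by (unfold dp; apply Rdiv_lt_0_compat; lra).
  set W := nu / 2 + CQ * (2 * K0 * C1) ^ 2.
  have HW : 0 <= W by (unfold W; pose proof (pow2_ge_0 (2 * K0 * C1)); nra).
  set dq := eps / (2 * (W + 1)).
  have Hdq : 0 < dq by (unfold dq; apply Rdiv_lt_0_compat; lra).
  exists (Rmin (Rmin 1 d1) (Rmin dp dq)); split.
  { apply Rmin_pos; apply Rmin_pos; lra. }
  intros t' sf' sh' Hd.
  pose proof (Rmin_l (Rmin 1 d1) (Rmin dp dq)); pose proof (Rmin_r (Rmin 1 d1) (Rmin dp dq)).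
  pose proof (Rmin_l 1 d1); pose proof (Rmin_r 1 d1); pose proof (Rmin_l dp dq); pose proof (Rmin_r dp dq).
  pose proof (dist3_ge0 taub t' sfb sf' shb sh') as HD.
  have D1 : dist3 taub t' sfb sf' shb sh' <= 1 by lra.
  specialize (T1 t' sf' sh' ltac:(lra) D1).
  specialize (BG t' sf' sh' D1). specialize (Bb t' sf' sh' D1). specialize (BQ t' sf' sh' D1).
  set D := dist3 taub t' sfb sf' shb sh' in Hd HD T1 BG Bb BQ D1 |- *.
  set G1 := GG t' sf' sh'.
  set E := fun i j => G1 i j - G0 i j.
  have Pert : forall d, N1 d <= 2 * K0 * N1 (matvec G1 d).
  { intros d. pose proof (Hinv d) as Q1.
    have Q2 : N1 (matvec G0 d) <= N1 (matvec G1 d) + N1 (matvec E d).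
    { unfold N1. rewrite -sumR_add. apply sumR_le => i.
      have -> : matvec G0 d i = matvec G1 d i - matvec E d i.
      { unfold matvec, E. rewrite -sumR_sub. apply sumR_ext => j. ring. }
      unfold Rminus. eapply Rle_trans; [apply Rabs_triang|]. rewrite Rabs_Ropp. lra. }
    have Q3 : N1 (matvec E d) <= (nR n * (Cg * D)) * N1 d by (apply N1_matvec_le; exact BG).
    have Q4 : K0 * (nR n * Cg) * D <= / 2.
    { assert (E2 : dp * (2 * (K0 * (nR n * Cg) + 1)) = 1) by (unfold dp; field; lra).
      assert (D < dp) by lra. nra. }
    pose proof (N1_ge0 d). pose proof (N1_ge0 (matvec E d)). pose proof (N1_ge0 (matvec G1 d)).
    assert (K0 * N1 (matvec E d) <= K0 * ((nR n * (Cg * D)) * N1 d)) by (apply Rmult_le_compat_l; lra).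
    assert (K0 * ((nR n * (Cg * D)) * N1 d) <= / 2 * N1 d).
    { replace (K0 * ((nR n * (Cg * D)) * N1 d)) with ((K0 * (nR n * Cg) * D) * N1 d) by ring.
      apply Rmult_le_compat_r; lra. }
    assert (K0 * N1 (matvec G0 d) <= K0 * (N1 (matvec G1 d) + N1 (matvec E d))) by (apply Rmult_le_compat_l; lra).
    lra. }
  have HG1 : nonsingular G1.
  { intros d Hd0 i. pose proof (Pert d) as P.
    have Z : N1 (matvec G1 d) = 0.
    { unfold N1. transitivity (sumR (fun _ : 'I_n => 0)); [|apply sumR_0].
      apply sumR_ext => j. rewrite Hd0. apply Rabs_R0. }
    rewrite Z in P. pose proof (comp_le_N1 d i). pose proof (Rabs_pos (d i)).
    assert (Rabs (d i) = 0) by lra. apply Rabs_eq_0 in H7 || idtac.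
    destruct (Req_dec (d i) 0) as [|Hne]; auto. exfalso. pose proof (Rabs_pos_lt _ Hne). lra. }
  destruct (nonsing_solve HG1 (fun i => - bX t' sf' sh' i)) as [x0 Hx0].
  have Hex : exists x, forall i, Xg x t' sf' sh' i = 0.
  { exists x0. intros i. unfold Xg. fold G1. rewrite Hx0. ring. }
  destruct (Pd_spec Hex) as [x1 [Hx1 ->]].
  rewrite (Pd0 HG).
  set Dl := vsub xbar x1.
  pose proof (Xi_quad_id x1 xbar t' sf' sh') as Q. fold Dl in Q.
  have Z : dot (Xg x1 t' sf' sh') Dl = 0.
  { rewrite -(dot_zero_l Dl). unfold dot. apply sumR_ext => i. rewrite Hx1. reflexivity. }
  have GD : forall i, matvec G1 Dl i = Xg xbar t' sf' sh' i.
  { intros i. unfold Dl. rewrite matvec_sub. pose proof (Hx1 i). unfold Xg in H5 |- *. fold G1 in H5 |- *. lra. }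
  have Nr : N1 (Xg xbar t' sf' sh') <= C1 * D.
  { unfold C1. rewrite Rmult_assoc. apply N1_const_bound => i.
    have -> : Xg xbar t' sf' sh' i = matvec E xbar i + (bX t' sf' sh' i - bX taub sfb shb i).
    { have M : matvec E xbar i = matvec G1 xbar i - matvec G0 xbar i.
      { unfold matvec, E. rewrite -sumR_sub. apply sumR_ext => j. ring. }
      rewrite M. pose proof (partE i) as P. unfold Xg in P |- *. fold G0 in P. fold G1. lra. }
    eapply Rle_trans; [apply Rabs_triang|].
    pose proof (matvec_bound xbar BG i) as MB. change (Rabs (matvec E xbar i) <= Cg * D * N1 xbar) in MB. specialize (Bb i).
    lra. }
  have NDl : N1 Dl <= 2 * K0 * C1 * D.
  { eapply Rle_trans; [apply Pert|].
    have -> : N1 (matvec G1 Dl) = N1 (Xg xbar t' sf' sh') by (unfold N1; apply sumR_ext => i; rewrite GD).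
    replace (2 * K0 * C1 * D) with ((2 * K0) * (C1 * D)) by ring.
    apply Rmult_le_compat_l; lra. }
  have BB : Rabs (bilin (QX t' sf' sh') Dl Dl) <= CQ * (2 * K0 * C1) ^ 2 * D ^ 2.
  { eapply Rle_trans; [apply (bilin_bound Dl Dl BQ)|]. pose proof (N1_ge0 Dl).
    assert (N1 Dl * N1 Dl <= (2 * K0 * C1 * D) * (2 * K0 * C1 * D)) by (apply Rmult_le_compat; lra).
    replace (CQ * (2 * K0 * C1) ^ 2 * D ^ 2) with (CQ * ((2 * K0 * C1 * D) * (2 * K0 * C1 * D))) by ring.
    rewrite Rmult_assoc. apply Rmult_le_compat_l; lra. }
  have -> : Xi x1 t' sf' sh' - Xi xbar taub sfb shb =
     (Xi xbar t' sf' sh' - Xi xbar taub sfb shb) - bilin (QX t' sf' sh') Dl Dl by lra.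
  unfold Rminus at 1. eapply Rle_trans; [apply Rabs_triang|]. rewrite Rabs_Ropp.
  have Wq : W * D <= eps / 2.
  { assert (E2 : dq * (2 * (W + 1)) = eps) by (unfold dq; field; lra).
    assert (D < dq) by lra. nra. }
  have : nu / 2 * D ^ 2 + CQ * (2 * K0 * C1) ^ 2 * D ^ 2 <= eps / 2 * D.
  { replace (nu / 2 * D ^ 2 + CQ * (2 * K0 * C1) ^ 2 * D ^ 2) with ((W * D) * D) by (unfold W; ring).
    apply Rmult_le_compat_r; lra. }
  lra.
Qed.

End Prob.

Theorem corollary1 (n kf l : nat) (A : mat n) (c : vec n)
  (Lf : qmap n kf) (Vf : vec kf -> R) (Ef Efs : vec kf -> Prop)
  (gVf gVfinv : vec kf -> vec kf)
  (Lh : qmap n l) (Vh : vec l -> R) (Eh Ehs : vec l -> Prop)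
  (gVh gVhinv : vec l -> vec l)
  (nu mu : R) (xbar : vec n) :
  msymmetric A ->
  canonical_fun Vf Ef Efs gVf gVfinv ->
  canonical_fun Vh Eh Ehs gVh gVhinv ->
  (forall x, Ef (qeval Lf x)) ->
  (forall x, Eh (qeval Lh x)) ->
  0 < nu ->
  x_stationary (Laug A c Lf Vf Lh Vh nu mu) xbar ->
  let taub := hcon Lh Vh xbar / nu in
  let sfb := gVf (qeval Lf xbar) in
  let shb := gVh (qeval Lh xbar) in
  (nonsingular (Gmat A Lf Lh mu taub sfb shb) ->
     stationary3 (Pd A c Lf Vf gVfinv Lh Vh gVhinv nu mu) taub sfb shb /\
     Laug A c Lf Vf Lh Vh nu mu xbar
       = Pd A c Lf Vf gVfinv Lh Vh gVhinv nu mu taub sfb shb) /\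
  (convex_on Ef Vf -> convex_on Eh Vh -> 0 < mu + taub ->
     posdef (Gmat A Lf Lh mu taub sfb shb) ->
     forall y : vec n, Laug A c Lf Vf Lh Vh nu mu xbar <= Laug A c Lf Vf Lh Vh nu mu y).
Proof.
  intros HA Cf Ch HEf HEh Hnu Hst taub0 sfb0 shb0.
  split.
  - intros HG. split.
    + eapply part1; eassumption.
    + symmetry. etransitivity; [eapply Pd0; eassumption | eapply Xi_xbar; eassumption].
  - intros Hcf Hch Hmt Hpd y. eapply part2; eassumption.
Qed.
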